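(* Let $(b_n)_{n\ge0}$ be a sequence of real numbers such that (1) $0\le b_n\le 1$ for all $n$; (2) $\limsup_{n\to\infty} b_n<1$; (3) $\sum_{k=0}^n b_kb_{n-k}\to\infty$ as $n\to\infty$. Then there is no set $A\subseteq\mathbb{N}$ such that $$R_A(n)=\sum_{k=0}^n b_kb_{n-k}+o\left(\Big(\sum_{k=0}^n b_kb_{n-k}\Big)^{1/2}\right)\quad (n\to\infty).$$
   Context: $\mathbb{N}$ denotes the set of non-negative integers. For $A\subseteq\mathbb{N}$, $R_A(n)$ denotes the number of ordered pairs $(a,a')$ with $a,a'\in A$ and $a+a'=n$. *)

(* Defs.v *)
From Stdlib Require Import Reals Lra Lia Bool.
Open Scope R_scope.

(* Subsets of N are represented by boolean predicates A : nat -> bool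
   (classically every subset has such a characteristic function). *)

(* R_A(n) = number of ordered pairs (a,a') in A x A with a + a' = n,
   i.e. number of k in {0..n} with k in A and n-k in A. *)
Fixpoint rep_count (A : nat -> bool) (n m : nat) : nat :=
  match m with
  | O => if andb (A O) (A n) then 1%nat else 0%nat
  | S m' => ((if andb (A m) (A (n - m)%nat) then 1%nat else 0%nat) + rep_count A n m')%nat
  end.

Definition R_A (A : nat -> bool) (n : nat) : nat := rep_count A n n.

Definition conv (b : nat -> R) (n : nat) : R :=
  sum_f_R0 (fun k => b k * b (n - k)%nat) n.

Definition limsup_lt_1 (b : nat -> R) : Prop :=
  exists c : R, c < 1 /\ exists N : nat, forall n : nat, (N <= n)%nat -> b n <= c.

Definition tends_to_infty (f : nat -> R) : Prop :=
  forall M : R, exists N : nat, forall n : nat, (N <= n)%nat -> M <= f n.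

Definition little_o_approx (f g h : nat -> R) : Prop :=
  forall eps : R, 0 < eps -> exists N : nat, forall n : nat, (N <= n)%nat ->
    Rabs (f n - g n) <= eps * Rabs (h n).

(* Main.v *)
Require Import Defs.
From Stdlib Require Import Reals.
Open Scope R_scope.
From mathcomp Require Import all_boot all_order all_algebra.
From mathcomp Require Import Rstruct.
From mathcomp Require Import ring lra zify.
Import Order.TTheory GRing.Theory Num.Theory.
Local Open Scope ring_scope.

Lemma sum_pick (F : nat -> R) K s :
  \sum_(n < K | (n : nat) == s) F n = if (s < K)%N then F s else 0.
Proof.
elim: K => [|K IH]; first by rewrite big_ord0.
rewrite big_mkcond big_ord_recr /= -big_mkcond IH.
case: (ltnP s K) => h.
- have -> : (K == s) = false by apply/eqP; lia.
  by rewrite addr0 (ltn_trans h (ltnSn K)).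
- case: eqP => [->|hne]; first by rewrite add0r ltnSn.
  have -> : (s < K.+1)%N = false by apply/negbTE; rewrite -leqNgt; lia.
  by rewrite addr0.
Qed.

Lemma sum_eq1 (F : nat -> R) M k n :
  \sum_(l < M | (k + l == n)%N) F l = if (k <= n)%N && (n - k < M)%N then F (n - k)%N else 0.
Proof.
elim: M => [|M IH]; first by rewrite big_ord0 ltn0 andbF.
rewrite big_mkcond big_ord_recr /= -big_mkcond IH.
case: (boolP ((k <= n)%N && (n - k < M)%N)) => /andP.
- case=> h1 h2. have -> : (k + M == n)%N = false by apply/eqP; lia.
  have -> : ((k <= n)%N && (n - k < M.+1)%N) by apply/andP; split; lia.
  by rewrite addr0.
- move=> h. case: eqP => [e|ne].
  + have -> : ((k <= n)%N && (n - k < M.+1)%N) by apply/andP; split; lia.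
    have -> : (n - k = M)%N by lia. by rewrite add0r.
  + have -> : ((k <= n)%N && (n - k < M.+1)%N) = false.
      apply/negbTE/negP => /andP [h1 h2]; apply: h; split; lia.
    by rewrite addr0.
Qed.

Definition cc (u v : nat -> R) M n :=
  \sum_(p : 'I_M * 'I_M | (p.1 + p.2 == n)%N) u p.1 * v p.2.

Lemma ccE (u v : nat -> R) M n : cc u v M n =
  \sum_(k < M) (if (k <= n)%N && (n - k < M)%N then u k * v (n - k)%N else 0).
Proof.
rewrite /cc -(pair_big_dep xpredT (fun (i j : 'I_M) => (i + j == n)%N)
   (fun (i j : 'I_M) => u i * v j)).
apply: eq_bigr => k _. by rewrite (sum_eq1 (fun l => u k * v l)).
Qed.

Lemma cc_trunc (u v : nat -> R) M n : (n < M)%N -> cc u v M n = \sum_(k < n.+1) u k * v (n - k)%N.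
Proof.
move=> h; rewrite ccE (big_ord_widen M (fun k => u k * v (n - k)%N) h) [RHS]big_mkcond.
apply: eq_bigr => k _.
case: (leqP k n) => hk.
- by rewrite ltnS hk /= (_ : (n - k < M)%N) //; lia.
- by rewrite ltnS (negbTE (_ : ~~ (k <= n)%N)) // -ltnNge.
Qed.

Lemma cc_bound (u v : nat -> R) M n (beta : R) : 0 <= beta ->
  (forall k, (k <= n)%N -> `|u k * v (n - k)%N| <= beta) -> `|cc u v M n| <= M%:R * beta.
Proof.
move=> hb h; rewrite ccE.
apply: le_trans (ler_norm_sum _ _ _) _.
apply: le_trans (_ : \sum_(k < M) beta <= _).
  apply: ler_sum => k _. case: ifP => [hh|_].
    by apply: h; case/andP: hh.
  by rewrite normr0.
by rewrite big_const_ord iter_addr addr0 mulr_natl.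
Qed.

Lemma cc_ge0 (u v : nat -> R) M n :
  (forall k, (k <= n)%N -> 0 <= u k * v (n - k)%N) -> 0 <= cc u v M n.
Proof.
move=> h; rewrite ccE; apply: sumr_ge0 => k _.
case: ifP => [hh|_] //. by apply: h; case/andP: hh.
Qed.

Lemma sp_lt M (p : 'I_M * 'I_M) : (p.1 + p.2 < M + M)%N.
Proof. case: p => [[i hi] [j hj]] /=; lia. Qed.

Lemma prod_cc (u v : nat -> R) M :
  (\sum_(k < M) u k) * (\sum_(l < M) v l) = \sum_(n < M + M) cc u v M n.
Proof.
rewrite big_distrl /=.
under eq_bigr do rewrite big_distrr.
rewrite pair_big /=.
rewrite /cc.
under [RHS]eq_bigr do rewrite big_mkcond.
rewrite exchange_big /=.
apply: eq_bigr => p _.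
rewrite -(big_mkcond (fun n : 'I_(M+M) => (p.1 + p.2 == n)%N)).
under eq_bigl do rewrite eq_sym.
by rewrite (sum_pick (fun _ => u p.1 * v p.2)) sp_lt.
Qed.

Definition Phi (u v : nat -> R) M :=
  \sum_(p : 'I_M * 'I_M) \sum_(q : 'I_M * 'I_M)
    (if (p.1 + p.2 == q.1 + q.2)%N then u p.1 * v p.2 * (u q.1 * v q.2) else 0).

Lemma if_sum (I : finType) (b : bool) (F : I -> R) :
  (if b then \sum_i F i else 0) = \sum_i (if b then F i else 0).
Proof. by case: b => //; rewrite big1. Qed.

Lemma claim1 (u v : nat -> R) M : \sum_(n < M + M) (cc u v M n)^+2 = Phi u v M.
Proof.
rewrite /Phi /cc.
under eq_bigr => n _ do rewrite expr2 big_distrl /=.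
under eq_bigr => n _ do under eq_bigr => p _ do rewrite big_distrr /=.
under eq_bigr => n _ do rewrite big_mkcond /=.
under eq_bigr => n _ do under eq_bigr => p _ do rewrite big_mkcond /= if_sum.
rewrite exchange_big /=.
apply: eq_bigr => p _.
rewrite exchange_big /=.
apply: eq_bigr => q _.
rewrite (_ : \sum_(i < M + M) _ = \sum_(i < M + M | (i : nat) == (p.1 + p.2)%N)
   (if (q.1 + q.2 == i)%N then u p.1 * v p.2 * (u q.1 * v q.2) else 0)).
  rewrite (sum_pick (fun i => if (q.1 + q.2 == i)%N then u p.1 * v p.2 * (u q.1 * v q.2) else 0)) sp_lt.
  by rewrite eq_sym.
rewrite [RHS]big_mkcond; apply: eq_bigr => i _.
by rewrite eq_sym; case: (_ == _).
Qed.

Definition sig4 M (x : ('I_M * 'I_M) * ('I_M * 'I_M)) :=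
  ((x.1.1, rev_ord x.2.2), (x.2.1, rev_ord x.1.2)).

Lemma sig4K M : cancel (@sig4 M) (@sig4 M).
Proof. by case=> [[a b] [c d]]; rewrite /sig4 /= !rev_ordK. Qed.

Lemma Phi_rev (u v : nat -> R) M : Phi u v M = Phi u (fun l => v (M.-1 - l)%N) M.
Proof.
rewrite /Phi !pair_big /=.
rewrite [RHS](reindex_inj (can_inj (@sig4K M))) /=.
apply: eq_bigr => [[[a b] [c d]]] _ /=.
have hb := ltn_ord b. have hd := ltn_ord d.
have -> : (a + (M - d.+1) == c + (M - b.+1))%N = (a + b == c + d)%N.
  by apply/eqP/eqP; lia.
case: (_ == _) => //.
have -> : (M.-1 - (M - d.+1) = d)%N by lia.
have -> : (M.-1 - (M - b.+1) = b)%N by lia.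
ring.
Qed.

Lemma key (u v : nat -> R) M : (0 < M)%N ->
  (\sum_(k < M) u k * v k)^+2 <= \sum_(n < M + M) (cc u v M n)^+2.
Proof.
move=> hM.
rewrite claim1 Phi_rev -claim1.
have hi : (M.-1 < M + M)%N by lia.
rewrite (bigD1 (Ordinal hi)) //= -[X in X <= _]addr0 lerD //; last first.
  by apply: sumr_ge0 => i _; apply: sqr_ge0.
rewrite cc_trunc; last by lia.
rewrite prednK //.
rewrite le_eqVlt; apply/orP; left; apply/eqP; congr (_ ^+ 2); apply: eq_bigr => k _.
by have hk := ltn_ord k; congr (_ * v _); lia.
Qed.

Definition gs (x : R) N M := \sum_(n < M) (if (N <= n)%N then x ^+ n else 0).

Lemma gs0 x N M : (M <= N)%N -> gs x N M = 0.
Proof.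
move=> h; rewrite /gs big1 // => i _.
by rewrite (_ : (N <= i)%N = false) //; have := ltn_ord i; lia.
Qed.

Lemma gsE x N M : (N <= M)%N -> (1 - x) * gs x N M = x ^+ N - x ^+ M.
Proof.
elim: M => [|M IH] h.
  by rewrite gs0 // (_ : N = 0%N) ?subrr ?mulr0 //; lia.
case: (leqP N M) => hNM.
  rewrite /gs big_ord_recr /= -/(gs x N M) hNM mulrDr IH // exprS; ring.
have -> : N = M.+1 by lia.
by rewrite gs0 // mulr0 subrr.
Qed.

Definition ab (A : nat -> bool) k : R := (A k)%:R.
Definition cvw (w : nat -> R) n := \sum_(k < n.+1) w k * w (n - k)%N.
Definition ee A (b : nat -> R) n := cvw (ab A) n - cvw b n.

Lemma sum_rev (F : nat -> R) n : \sum_(k < n.+1) F k = \sum_(k < n.+1) F (n - k)%N.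
Proof.
rewrite -(big_mkord xpredT F) big_rev_mkord subn0.
by apply: eq_bigr => k _; rewrite subSS.
Qed.

Lemma e_sym A (b : nat -> R) n : ee A b n =
  \sum_(k < n.+1) (ab A k - b k) * (ab A (n - k)%N + b (n - k)%N).
Proof.
rewrite /ee /cvw.
have hs : \sum_(k < n.+1) ab A k * b (n - k)%N = \sum_(k < n.+1) b k * ab A (n - k)%N.
  rewrite (sum_rev (fun k => ab A k * b (n - k)%N)); apply: eq_bigr => k _.
  have hk := ltn_ord k.
  rewrite (_ : (n - (n - k) = k)%N); first by rewrite mulrC.
  lia.
transitivity (\sum_(k < n.+1) (ab A k * ab A (n - k)%N - b k * b (n - k)%N)
   + (\sum_(k < n.+1) ab A k * b (n - k)%N - \sum_(k < n.+1) b k * ab A (n - k)%N)).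
  by rewrite hs subrr addr0 sumrB.
rewrite -sumrB -big_split /=.
by apply: eq_bigr => k _; ring.
Qed.

Lemma eqle (x y : R) : x = y -> x <= y.
Proof. by move=> ->. Qed.

Lemma abK A k : ab A k * ab A k = ab A k.
Proof. by rewrite /ab; case: (A k); rewrite ?mulr1 ?mulr0. Qed.

Lemma ab01 A k : 0 <= ab A k <= 1.
Proof. by rewrite /ab; case: (A k) => /=; rewrite ?lexx ?ler01. Qed.

Lemma sqrX (r : R) k : (r ^+ 2) ^+ k = r ^+ k * r ^+ k.
Proof. by rewrite -exprM mulnC exprM expr2. Qed.

Lemma sq_le (c B : R) : `|c| <= B -> c ^+ 2 <= B ^+ 2.
Proof. move/ler_normlP => [h1 h2]; rewrite !expr2; nra. Qed.

Lemma factA A (b : nat -> R) (r : R) M : 0 <= r <= 1 -> (forall k, 0 <= b k <= 1) -> (0 < M)%N ->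
  (\sum_(k < M) ab A k * (r ^+ 2) ^+ k - \sum_(k < M) b k ^+ 2 * (r ^+ 2) ^+ k) ^+ 2
   <= \sum_(n < M) ee A b n ^+ 2 * (r ^+ 2) ^+ n + 4 * M%:R ^+ 3 * (r ^+ 2) ^+ M.
Proof.
move=> /andP [r0 r1] hb hM.
pose u := fun k => (ab A k - b k) * r ^+ k.
pose v := fun k => (ab A k + b k) * r ^+ k.
have -> : \sum_(k < M) ab A k * (r ^+ 2) ^+ k - \sum_(k < M) b k ^+ 2 * (r ^+ 2) ^+ k
   = \sum_(k < M) u k * v k.
  rewrite -sumrB; apply: eq_bigr => k _; rewrite /u /v sqrX.
  have ha := abK A k. rewrite -{1}ha; ring.
apply: le_trans (@key u v M hM) _.
rewrite big_split_ord /=.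
apply: lerD.
  rewrite le_eqVlt; apply/orP; left; apply/eqP.
  apply: eq_bigr => i _ /=.
  rewrite cc_trunc // e_sym.
  have -> : \sum_(i0 < i.+1) u i0 * v (i - i0)%N =
     \sum_(i0 < i.+1) r ^+ i * ((ab A i0 - b i0) * (ab A (i - i0)%N + b (i - i0)%N)).
    apply: eq_bigr => k _; rewrite /u /v.
    have hk := ltn_ord k.
    rewrite (_ : r ^+ i = r ^+ k * r ^+ (i - k)); last by rewrite -exprD subnKC.
    ring.
  by rewrite -mulr_sumr sqrX; ring.
apply: le_trans (_ : \sum_(i < M) (M%:R * (2 * r ^+ M)) ^+ 2 <= _).
  apply: ler_sum => i _; apply: sq_le; apply: cc_bound.
    by rewrite mulr_ge0 ?exprn_ge0.
  move=> k hk; rewrite /u /v.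
  have hk' := hk.
  rewrite (_ : (ab A k - b k) * r ^+ k * ((ab A (M + i - k)%N + b (M + i - k)%N) * r ^+ (M + i - k)%N)
     = ((ab A k - b k) * (ab A (M + i - k)%N + b (M + i - k)%N)) * r ^+ (M + i)); last first.
    rewrite (_ : r ^+ (M + i) = r ^+ k * r ^+ (M + i - k)%N); last by rewrite -exprD subnKC.
    ring.
  rewrite normrM (ger0_norm (exprn_ge0 _ r0)).
  have hrM : r ^+ (M + i) <= r ^+ M by apply: ler_wiXn2l => //; apply: leq_addr.
  have hr0 : 0 <= r ^+ (M + i) by apply: exprn_ge0.
  have hn : `|(ab A k - b k) * (ab A (M + i - k)%N + b (M + i - k)%N)| <= 2.
    apply/ler_normlP; have := ab01 A k; have := ab01 A (M + i - k)%N;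
    have := hb k; have := hb (M + i - k)%N%N => /andP[? ?] /andP[? ?] /andP[? ?] /andP[? ?]; split; nra.
  have := normr_ge0 ((ab A k - b k) * (ab A (M + i - k)%N + b (M + i - k)%N)); nra.
rewrite big_const_ord iter_addr addr0 sqrX -mulr_natr.
by apply: eqle; ring.
Qed.

Lemma factC (w : nat -> R) (x : R) M : 0 <= x <= 1 -> (forall k, 0 <= w k <= 1) ->
  \sum_(n < M) cvw w n * x ^+ n <= (\sum_(k < M) w k * x ^+ k) ^+ 2 /\
  (\sum_(k < M) w k * x ^+ k) ^+ 2 <= \sum_(n < M) cvw w n * x ^+ n + M%:R ^+ 2 * x ^+ M.
Proof.
move=> /andP [x0 x1] hw.
pose u := fun k => w k * x ^+ k.
have -> : (\sum_(k < M) w k * x ^+ k) ^+ 2 = (\sum_(k < M) u k) * (\sum_(k < M) u k) by rewrite expr2.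
rewrite prod_cc big_split_ord /=.
have E : \sum_(i < M) cc u u M i = \sum_(n < M) cvw w n * x ^+ n.
  apply: eq_bigr => i _; rewrite cc_trunc // /cvw mulr_suml.
  apply: eq_bigr => k _; rewrite /u.
  have hk := ltn_ord k.
  rewrite (_ : x ^+ i = x ^+ k * x ^+ (i - k)%N); last by rewrite -exprD subnKC.
  ring.
have T0 : 0 <= \sum_(i < M) cc u u M (M + i).
  apply: sumr_ge0 => i _; apply: cc_ge0 => k _; rewrite /u.
  have := hw k; have := hw (M + i - k)%N => /andP[? ?] /andP[? ?].
  by rewrite mulr_ge0 // mulr_ge0 // exprn_ge0.
have T1 : \sum_(i < M) cc u u M (M + i) <= M%:R ^+ 2 * x ^+ M.
  apply: le_trans (_ : \sum_(i < M) M%:R * x ^+ M <= _); last first.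
    by rewrite big_const_ord iter_addr addr0 -mulr_natr; apply: eqle; ring.
  apply: ler_sum => i _; apply: le_trans (ler_norm _) _; apply: cc_bound.
    by rewrite exprn_ge0.
  move=> k hk; rewrite /u.
  rewrite (_ : w k * x ^+ k * (w (M + i - k)%N * x ^+ (M + i - k)%N)
     = (w k * w (M + i - k)%N) * x ^+ (M + i)); last first.
    rewrite (_ : x ^+ (M + i) = x ^+ k * x ^+ (M + i - k)%N); last by rewrite -exprD subnKC.
    ring.
  have hxM : x ^+ (M + i) <= x ^+ M by apply: ler_wiXn2l => //; apply: leq_addr.
  have hx0 : 0 <= x ^+ (M + i) by apply: exprn_ge0.
  have := hw k; have := hw (M + i - k)%N => /andP[ha1 ha2] /andP[hb1 hb2].
  have hww : w k * w (M + i - k)%N <= 1 by nra.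
  have hww0 : 0 <= w k * w (M + i - k)%N by nra.
  rewrite ger0_norm; first nra.
  by rewrite !mulr_ge0.
rewrite E; split; lra.
Qed.

Lemma factB A (b : nat -> R) (x : R) M : 0 <= x ->
  2 * (\sum_(n < M) cvw b n * x ^+ n - \sum_(n < M) cvw (ab A) n * x ^+ n)
  <= \sum_(n < M) ee A b n ^+ 2 * x ^+ n + \sum_(n < M) x ^+ n.
Proof.
move=> x0.
rewrite -sumrB mulr_sumr -big_split /=.
apply: ler_sum => n _.
have hx := exprn_ge0 n x0.
rewrite /ee expr2.
set p := cvw (ab A) n. set q := cvw b n.
have := mulr_ge0 hx (sqr_ge0 (p - q + 1)).
rewrite expr2. nra.
Qed.

Lemma factD A (b : nat -> R) (x eps : R) M N0 : 0 <= x <= 1 ->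
  (forall n, 0 <= cvw b n) -> (N0 <= M)%N ->
  (forall n, (N0 <= n)%N -> ee A b n ^+ 2 <= eps ^+ 2 * cvw b n) ->
  \sum_(n < M) ee A b n ^+ 2 * x ^+ n
  <= eps ^+ 2 * \sum_(n < M) cvw b n * x ^+ n + \sum_(n < N0) ee A b n ^+ 2.
Proof.
move=> /andP [x0 x1] hc hN h.
rewrite (big_ord_widen M (fun n => ee A b n ^+ 2) hN) mulr_sumr [X in _ + X]big_mkcond -big_split /=.
apply: ler_sum => n _.
have hx := exprn_ge0 n x0.
have hx1 : x ^+ n <= 1 by apply: exprn_ile1.
have he := sqr_ge0 (ee A b n).
have hcn := hc n.
have he2 : 0 <= eps ^+ 2 by apply: sqr_ge0.
case: (ltnP n N0) => hn /=.
- have : 0 <= eps ^+ 2 * (cvw b n * x ^+ n) by apply: mulr_ge0 => //; apply: mulr_ge0.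
  nra.
- have := h n hn => hh. rewrite addr0.
  have : 0 <= (eps ^+ 2 * cvw b n - ee A b n ^+ 2) * x ^+ n by apply: mulr_ge0 => //; lra.
  move=> ?; nra.
Qed.

Lemma factE (b : nat -> R) (x c : R) M N1 : 0 <= x <= 1 -> 0 <= c ->
  (forall k, 0 <= b k <= 1) -> (N1 <= M)%N -> (forall k, (N1 <= k)%N -> b k <= c) ->
  \sum_(k < M) b k ^+ 2 * x ^+ k <= c * \sum_(k < M) b k * x ^+ k + N1%:R.
Proof.
move=> /andP [x0 x1] c0 hb hN h.
have -> : (N1%:R : R) = \sum_(k < N1) 1 by rewrite big_const_ord iter_addr addr0.
rewrite (big_ord_widen M (fun _ => (1 : R)) hN) mulr_sumr [X in _ + X]big_mkcond -big_split /=.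
apply: ler_sum => k _.
have hx := exprn_ge0 k x0.
have hx1 : x ^+ k <= 1 by apply: exprn_ile1.
have /andP [b0 b1] := hb k.
rewrite expr2.
case: (ltnP k N1) => hk /=.
- have : 0 <= c * (b k * x ^+ k) by apply: mulr_ge0 => //; apply: mulr_ge0.
  have hbb : b k * b k <= 1 by nra.
  have hbb0 : 0 <= b k * b k by nra.
  have : b k * b k * x ^+ k <= 1 by nra.
  move=> h1 h2; apply: le_trans h1 _; rewrite lerDr //.
- have := h k hk => hbc. rewrite addr0.
  have : 0 <= (c - b k) * (b k * x ^+ k) by apply: mulr_ge0; [lra | apply: mulr_ge0].
  move=> ?; nra.
Qed.

Lemma factF (b : nat -> R) (x L : R) M N : 0 <= x <= 1 ->
  (forall n, 0 <= cvw b n) -> (N <= M)%N -> (forall n, (N <= n)%N -> L <= cvw b n) ->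
  L * (x ^+ N - x ^+ M) <= (1 - x) * \sum_(n < M) cvw b n * x ^+ n.
Proof.
move=> /andP [x0 x1] hc hN h.
rewrite -gsE // mulrCA; apply: ler_wpM2l; first lra.
rewrite /gs mulr_sumr; apply: ler_sum => n _.
have hx := exprn_ge0 n x0.
case: (leqP N n) => hn.
- have := h n hn; nra.
- by rewrite mulr0 mulr_ge0.
Qed.

Lemma factZ (x : R) M : (1 - x) * \sum_(n < M) x ^+ n = 1 - x ^+ M.
Proof.
rewrite -[1 in RHS](expr0 x) -(@gsE x 0 M (leq0n M)) /gs; congr (_ * _).
Qed.

Lemma sumfE (f : nat -> R) n : sum_f_R0 f n = \sum_(k < n.+1) f k.
Proof.
elim: n => [|n IH]; first by rewrite big_ord_recr big_ord0 /= add0r.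
by rewrite big_ord_recr /= -IH.
Qed.

Lemma repE A n m : INR (rep_count A n m) = \sum_(k < m.+1) ab A k * ab A (n - k)%N.
Proof.
rewrite INRE.
elim: m => [|m IH].
  rewrite big_ord_recr big_ord0 /= add0r /ab subn0.
  by case: (A 0%N); case: (A n); rewrite /= ?mulr1 ?mulr0 ?mul0r.
change (rep_count A n m.+1) with ((if A m.+1 && A (n - m.+1)%coq_nat then 1 else 0) + rep_count A n m)%N.
rewrite big_ord_recr -IH natrD addrC; congr (_ + _).
rewrite /ab /=.
have -> : (n - m.+1)%coq_nat = (n - m.+1)%N by [].
by case: (A m.+1); case: (A (n - m.+1)%N); rewrite /= ?mulr1 ?mulr0 ?mul0r.
Qed.

Lemma convE (b : nat -> R) n : conv b n = cvw b n.
Proof. by rewrite /conv sumfE. Qed.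

Lemma RAE A n : INR (R_A A n) = cvw (ab A) n.
Proof. by rewrite /R_A repE. Qed.

Lemma bern_up (h : R) k : 0 <= h -> 1 + k%:R * h <= (1 + h) ^+ k.
Proof.
move=> h0; elim: k => [|k IH]; first by rewrite mul0r addr0 expr0.
rewrite exprS -natr1.
have : 0 <= (1 + h) ^+ k by apply: exprn_ge0; lra.
have : 0 <= k%:R * h by apply: mulr_ge0.
nra.
Qed.

Lemma bern_down (y : R) k : 0 <= y <= 1 -> 1 - k%:R * y <= (1 - y) ^+ k.
Proof.
move=> /andP [y0 y1]; elim: k => [|k IH]; first by rewrite mul0r subr0 expr0.
rewrite exprS -natr1.
have : 0 <= k%:R * y by apply: mulr_ge0.
nra.
Qed.

Lemma choose_M (m K : nat) (xx : R) : (0 < m)%N -> xx = m%:R / m.+1%:R ->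
  exists M, (K <= M)%N /\ (0 < M)%N /\ xx ^+ M <= 1 / 4 /\ 4 * M%:R ^+ 3 * xx ^+ M <= 1.
Proof.
move=> hm {xx}->.
set k := (256 * m ^ 4 + 4 * m + K + 1)%N.
have m0 : 0 < m%:R :> R by rewrite ltr0n.
have x0 : 0 <= m%:R / m.+1%:R :> R by rewrite divr_ge0 // ler0n.
have x1 : m%:R / m.+1%:R * (1 + m%:R^-1) = 1 :> R.
  rewrite -natr1; field.
  by apply/andP; split; apply/lt0r_neq0 => //; lra.
move: x0 x1; set x := m%:R / m.+1%:R => x0 x1.
have hxk : x ^+ k * k%:R <= m%:R.
  have mi0 : 0 < m%:R^-1 :> R by rewrite invr_gt0.
  have hb := @bern_up (m%:R^-1) k (ltW mi0).
  have e : x ^+ k * (1 + m%:R^-1) ^+ k = 1 by rewrite -exprMn x1 expr1n.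
  have hxk0 : 0 <= x ^+ k by apply: exprn_ge0.
  have : x ^+ k * (1 + k%:R * m%:R^-1) <= 1.
    rewrite -[X in _ <= X]e; apply: ler_wpM2l => //.
  have hmi : m%:R * m%:R^-1 = 1 :> R by rewrite mulfV //; lra.
  move=> h1.
  have h2 := ler_wpM2l (ltW m0) h1.
  have e2 : m%:R * (x ^+ k * (1 + k%:R * m%:R^-1)) = m%:R * x ^+ k + x ^+ k * k%:R * (m%:R * m%:R^-1) by ring.
  rewrite e2 hmi mulr1 in h2.
  have : 0 <= m%:R * x ^+ k by apply: mulr_ge0 => //; lra.
  lra.
have K0 : 0 <= K%:R :> R by rewrite ler0n.
have kR : 256 * m%:R ^+ 4 + 4 * m%:R + 1 <= k%:R :> R.
  have -> : k%:R = 256 * m%:R ^+ 4 + 4 * m%:R + K%:R + 1 :> R.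
    by rewrite /k -natrX -!natrM -!natrD natr1 addn1.
  lra.
have m1 : 1 <= m%:R :> R by rewrite ler1n.
exists (4 * k)%N; split; first by rewrite /k; lia.
split; first by rewrite /k; lia.
have hxk0 : 0 <= x ^+ k by apply: exprn_ge0.
have hm4' : 0 <= m%:R ^+ 4 :> R by apply: exprn_ge0.
have hk0 : 0 < k%:R :> R by lra.
have x1' : x <= 1.
  rewrite /x ler_pdivrMr ?ltr0n // mul1r ler_nat; lia.
split.
- apply: le_trans (_ : x ^+ k <= _); first by apply: ler_wiXn2l => //; lia.
  have hm4 : 0 <= m%:R ^+ 4 :> R by apply: exprn_ge0.
  have h4 : 4 * m%:R <= k%:R :> R by lra.
  have : x ^+ k * (4 * m%:R) <= x ^+ k * k%:R by apply: ler_wpM2l.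
  move=> h5. nra.
- rewrite natrM (mulnC 4 k) exprM.
  have h4 : (x ^+ k * k%:R) ^+ 4 <= m%:R ^+ 4.
    apply: lerXn2r; rewrite ?nnegrE ?mulr_ge0 //; lra.
  have hm4 : 0 <= m%:R ^+ 4 :> R by apply: exprn_ge0.
  have h256 : 256 * m%:R ^+ 4 <= k%:R :> R by lra.
  rewrite exprMn in h4.
  move: h4 h256 hm4.
  set X := x ^+ k ^+ 4. set Kr := k%:R. set P := m%:R ^+ 4.
  have X0 : 0 <= X by apply: exprn_ge0.
  move=> h4 h256 hm4.
  have e4 : Kr ^+ 4 = Kr * (Kr * (Kr * Kr)) by rewrite !exprS expr0 mulr1.
  have e3 : (4 * Kr) ^+ 3 = 64 * (Kr * (Kr * Kr)) by rewrite !exprS expr0 mulr1; ring.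
  rewrite e3; rewrite e4 in h4.
  have hK3 : 0 <= Kr * (Kr * Kr) by rewrite !mulr_ge0 //; lra.
  have : X * (Kr * (Kr * Kr)) * Kr <= P by lra.
  nra.
Qed.
Lemma final_arith (d F G B2 RA CV E2 Z T K0 n1 : R) :
  0 < d -> d <= 1 -> 0 <= F -> 0 <= G -> 0 <= T -> T <= 1 -> 0 <= CV -> 0 <= K0 -> 0 <= n1 ->
  (F - B2) ^+ 2 <= E2 + T -> 2 * (CV - RA) <= E2 + Z -> RA <= F ^+ 2 -> CV <= G ^+ 2 ->
  G ^+ 2 <= CV + T -> E2 <= (d / 8) ^+ 2 * CV + K0 -> B2 <= (1 - d) * G + n1 ->
  Z <= d / 2 * CV -> 16 * n1 ^+ 2 + 64 * (K0 + 2) < d ^+ 2 * CV -> False.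
Proof.
move=> d0 d1 F0 G0 T0 T1 CV0 K00 n10 hA hB hC1 hC2 hC3 hD hE hZ hH.
case: (leP ((1 - d / 2) * G) F) => hF.
- have hg : d ^+ 2 * CV <= (d * G) ^+ 2 by rewrite exprMn; apply: ler_wpM2l => //; apply: exprn_ge0; lra.
  have dG0 : 0 <= d * G by apply: mulr_ge0; lra.
  have h4 : 4 * n1 <= d * G.
    rewrite leNgt; apply/negP => hlt.
    have : (d * G) ^+ 2 <= (4 * n1) ^+ 2.
      rewrite !expr2; nra.
    rewrite !expr2 in hH hg * => h; nra.
  have hFB : d * G / 4 <= F - B2 by nra.
  have hFB2 : (d * G) ^+ 2 / 16 <= (F - B2) ^+ 2.
    rewrite !expr2; have : 0 <= d * G / 4 by apply: mulr_ge0 => //; lra. nra.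
  have : (d * G) ^+ 2 / 16 <= (d / 8) ^+ 2 * (G ^+ 2 + T) + K0 + 1.
    have : (d / 8) ^+ 2 * CV <= (d / 8) ^+ 2 * (G ^+ 2 + T).
      apply: ler_wpM2l; first by apply: exprn_ge0; lra. lra.
    lra.
  rewrite !expr2 in hH hg * => h; nra.
- have hF2 : F ^+ 2 <= (1 - d / 2) ^+ 2 * (CV + 1).
    apply: le_trans (_ : (1 - d / 2) ^+ 2 * G ^+ 2 <= _).
      rewrite -exprMn !expr2; nra.
    apply: ler_wpM2l; first by apply: exprn_ge0; lra. lra.
  rewrite !expr2 in hH hF2 hD hA hC1 *; nra.
Qed.

Lemma theorem9_aux (b : nat -> R) :
  (forall n : nat, Rle 0 (b n) /\ Rle (b n) 1) ->
  limsup_lt_1 b ->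
  tends_to_infty (conv b) ->
  ~ exists A : nat -> bool,
      little_o_approx (fun n => INR (R_A A n)) (conv b) (fun n => sqrt (conv b n)).
Proof.
move=> hb hls hinf [A hA].
have hb' : forall n, 0 <= b n <= 1.
  by move=> n; case: (hb n) => h1 h2; apply/andP; split; apply/RleP.
case: hls => c [hc1 [N1 hN1]].
have hc' : c < 1 by apply/RltP.
have hN1' : forall k, (N1 <= k)%N -> b k <= c.
  by move=> k hk; apply/RleP; exact: (hN1 k (elimT ssrnat.leP hk)).
have c0 : 0 <= c.
  have := hb' N1; have := hN1' N1 (leqnn N1) => h /andP [h1 _]; lra.
have cv0 : forall n, 0 <= cvw b n.
  move=> n; apply: sumr_ge0 => k _.
  by have := hb' k; have := hb' (n - k)%N => /andP [? ?] /andP [? ?]; apply: mulr_ge0.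
pose d := 1 - c.
have d0 : 0 < d by rewrite /d; lra.
have d1 : d <= 1 by rewrite /d; lra.
pose eps := d / 8.
have eps0 : 0 < eps by rewrite /eps; lra.
have eps0' : Rlt 0 eps by apply/RltP.
have [N0 hN0] := hA eps eps0'.
have he : forall n, (N0 <= n)%N -> ee A b n ^+ 2 <= eps ^+ 2 * cvw b n.
  move=> n hn.
  have h := hN0 n (elimT ssrnat.leP hn).
  have y0 : Rle 0 (conv b n) by apply/RleP; rewrite convE.
  rewrite (Rabs_pos_eq (sqrt (conv b n))) in h; last exact: sqrt_pos.
  have hs : sqrt (conv b n) ^+ 2 = conv b n by rewrite expr2; exact: sqrt_sqrt _ y0.
  move/RleP: h => h.
  have h2 : `|INR (R_A A n) - conv b n| <= eps * sqrt (conv b n) := h.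
  have := @sq_le _ _ h2; rewrite exprMn hs /ee RAE convE; apply.
set K0 := \sum_(n < N0) ee A b n ^+ 2.
have K00 : 0 <= K0 by apply: sumr_ge0 => n _; apply: sqr_ge0.
pose L := 4 / d.
have L0 : 0 < L by rewrite /L divr_gt0 //.
have [N hN] := hinf L.
have hN' : forall n, (N <= n)%N -> L <= cvw b n.
  by move=> n hn; rewrite -convE; apply/RleP; exact: (hN n (elimT ssrnat.leP hn)).
pose n1 : R := N1%:R.
have n10 : 0 <= n1 by rewrite /n1 ler0n.
pose Hc := 16 * n1 ^+ 2 + 64 * (K0 + 2).
pose m := (Num.trunc (Hc / d) + 4 * N + 1)%N.
have hm0 : (0 < m)%N by rewrite /m addn1.
have hmH : Hc / d < m.+1%:R.
  apply: lt_le_trans (truncnS_gt _) _; rewrite ler_nat /m; move: (Num.trunc _) => t; lia.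
have hmN : 4 * N%:R <= m.+1%:R :> R by rewrite -natrM ler_nat /m; move: (Num.trunc _) => t; lia.
pose x := m%:R / (m.+1%:R : R).
have mS0 : 0 < m.+1%:R :> R by rewrite ltr0n.
have hy : 1 - x = m.+1%:R^-1.
  rewrite /x -natr1; field; apply/lt0r_neq0; rewrite natr1; done.
have x0 : 0 <= x by rewrite /x divr_ge0 // ler0n.
have x1 : x <= 1 by rewrite /x ler_pdivrMr ?ltr0n // mul1r ler_nat.
have x01 : 0 <= x <= 1 by rewrite x0 x1.
have hyy : m.+1%:R * (1 - x) = 1 by rewrite hy mulfV //; apply/lt0r_neq0.
have hxN : 3 / 4 <= x ^+ N.
  have hyi : 0 <= 1 - x <= 1 by apply/andP; split; lra.
  have e1 : 1 - (1 - x) = x by ring.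
  have hb2 : 1 - N%:R * (1 - x) <= x ^+ N.
    by have := @bern_down (1 - x) N hyi; rewrite e1.
  apply: le_trans hb2.
  have : N%:R * (1 - x) <= 1 / 4.
    have : 0 <= (m.+1%:R - 4 * N%:R) * (1 - x) by apply: mulr_ge0; lra.
    move=> hh. nra.
  move=> ?; lra.
have [M [hKM [hM0 [hxM hT]]]] := @choose_M m (N + N0 + N1 + 1) x hm0 (erefl _).
set T := 4 * M%:R ^+ 3 * x ^+ M.
have hxM0 : 0 <= x ^+ M by apply: exprn_ge0.
have M1 : 1 <= M%:R :> R by rewrite ler1n.
have hT0 : 0 <= T by rewrite /T !mulr_ge0 // ?exprn_ge0 // ler0n.
have hMT : M%:R ^+ 2 * x ^+ M <= T.
  rewrite /T; have : M%:R ^+ 2 <= 4 * M%:R ^+ 3 :> R.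
    rewrite !exprS expr0 !mulr1; nra.
  move=> h; apply: ler_wpM2r => //.
pose r := sqrt x.
have hr2 : r ^+ 2 = x by rewrite expr2; apply: sqrt_sqrt; apply/RleP.
have r0 : 0 <= r by apply/RleP; apply: sqrt_pos.
have r1 : r <= 1.
  have : r * r <= 1 by rewrite -expr2 hr2.
  nra.
have fA := @factA A b r M (introT andP (conj r0 r1)) hb' hM0.
rewrite hr2 -/T in fA.
have fB := @factB A b x M x0.
have [fC1 _] := @factC (ab A) x M x01 (ab01 A).
have [fC2 fC3] := @factC b x M x01 hb'.
have hNM : (N <= M)%N by move: hKM; clear; lia.
have hN0M : (N0 <= M)%N by move: hKM; clear; lia.
have hN1M : (N1 <= M)%N by move: hKM; clear; lia.
have fD := @factD A b x eps M N0 x01 cv0 hN0M he.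
have fE := @factE b x c M N1 x01 c0 hb' hN1M hN1'.
have fF := @factF b x L M N x01 cv0 hNM hN'.
have fZ := factZ x M.
rewrite -/K0 in fD.
set F := \sum_(k < M) ab A k * x ^+ k in fA fC1.
set G := \sum_(k < M) b k * x ^+ k in fE fC2 fC3.
set B2 := \sum_(k < M) b k ^+ 2 * x ^+ k in fA fE.
set RA := \sum_(n < M) cvw (ab A) n * x ^+ n in fB fC1.
set CV := \sum_(n < M) cvw b n * x ^+ n in fB fC2 fC3 fD fF.
set E2 := \sum_(n < M) ee A b n ^+ 2 * x ^+ n in fA fB fD.
set Z := \sum_(n < M) x ^+ n in fB fZ.
have F0 : 0 <= F by apply: sumr_ge0 => k _; apply: mulr_ge0; [case/andP: (ab01 A k) | apply: exprn_ge0].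
have G0 : 0 <= G by apply: sumr_ge0 => k _; apply: mulr_ge0; [case/andP: (hb' k) | apply: exprn_ge0].
have CV0 : 0 <= CV by apply: sumr_ge0 => k _; apply: mulr_ge0; [apply: cv0 | apply: exprn_ge0].
have hdCV : 2 * m.+1%:R <= d * CV.
  have h1 : L / 2 <= (1 - x) * CV.
    apply: le_trans fF.
    have : 1 / 2 <= x ^+ N - x ^+ M by lra.
    move=> ?; nra.
  have h2 : d * (L / 2) = 2 by rewrite /L; field; apply/lt0r_neq0.
  have h3 := ler_wpM2l (ltW d0) h1.
  rewrite h2 in h3.
  have h4 := ler_wpM2l (ltW mS0) h3.
  have e : m.+1%:R * (d * ((1 - x) * CV)) = (m.+1%:R * (1 - x)) * (d * CV) by ring.
  rewrite e hyy mul1r in h4; lra.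
have hZ : Z <= d / 2 * CV.
  have : Z <= m.+1%:R.
    have h := ler_wpM2l (ltW mS0) (_ : (1 - x) * Z <= 1).
    have e : m.+1%:R * ((1 - x) * Z) = (m.+1%:R * (1 - x)) * Z by ring.
    rewrite e hyy mul1r mulr1 in h; apply: h. rewrite fZ; lra.
  lra.
have hH : Hc < d ^+ 2 * CV.
  have hm' : Hc < d * m.+1%:R.
    by rewrite mulrC -ltr_pdivrMr.
  have : d * m.+1%:R * 2 <= d * (d * CV).
    rewrite -mulrA [m.+1%:R * 2]mulrC; apply: ler_wpM2l; lra.
  rewrite expr2 -mulrA.
  have : 0 <= d * m.+1%:R by apply: mulr_ge0; lra.
  have : 0 <= Hc by rewrite /Hc; apply: addr_ge0; [apply: mulr_ge0 => //; apply: exprn_ge0 | lra].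
  lra.
apply: (@final_arith d F G B2 RA CV E2 Z T K0 n1) => //.
- lra.
- have e : 1 - d = c by rewrite /d; ring.
  by rewrite e.
Qed.


Local Close Scope ring_scope.

Theorem theorem9 (b : nat -> R) :
  (forall n : nat, 0 <= b n <= 1) ->
  limsup_lt_1 b ->
  tends_to_infty (conv b) ->
  ~ exists A : nat -> bool,
      little_o_approx (fun n => INR (R_A A n)) (conv b) (fun n => sqrt (conv b n)).
Proof.
move=> hb; apply: theorem9_aux => n; exact: hb n.
Qed.
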